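(* Let $M$ be a layered Markov Transition Model, $\pi_e$ a deterministic evaluation policy, $\Phi$ any aggregation scheme, and let the offline distribution be admissible: $\mu_h(x,a)=d_h^{\pi_b}(x;M)\pi_b(a|x)$ for all $h\in[H]$ and some policy $\pi_b$. Suppose $\frac{1}{\pi_b(\pi_e(x)|x)}\le\mathsf{C}_{\mathcal{A}}$ for all $x\in\mathcal{X}$. Then for every $\epsilon>0$ (for which the maximum defining $\bar{\mathsf{C}}_\epsilon$ is over a nonempty set), $\bar{\mathsf{C}}_\epsilon(M,\Phi,\mu)\le(\mathsf{C}_{\mathcal{A}})^H$.
   Context: Markov Transition Model $M=(\mathcal{X},\mathcal{A},T,H,\rho)$ with finite layered state space $\mathcal{X}_1\cup\dots\cup\mathcal{X}_H$, finite actions, $T(\cdot|x,a)$ supported on $\mathcal{X}_{h+1}$ for $x\in\mathcal{X}_h$, $\rho\in\Delta(\mathcal{X}_1)$. $d_h^\pi(x;M)=\Pr(x_h=x)$ under $x_1\sim\rho$, $a_h\sim\pi(\cdot|x_h)$, $x_{h+1}\sim T(\cdot|x_h,a_h)$. Aggregation scheme: $\Phi=\Phi_1\cup\dots\cup\Phi_H$, $\Phi_h$ a partition of $\mathcal{X}_h$. Aggregated transitions, for $\phi\in\Phi_h,\phi'\in\Phi_{h+1}$: $\bar T(\phi'|\phi,\pi)=\frac{\sum_{x\in\phi}\sum_{x'\in\phi'}\sum_a\pi(a|x)\mu_h(x,a)T(x'|x,a)}{\sum_{x\in\phi}\sum_a\pi(a|x)\mu_h(x,a)}$. Aggregated occupancy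 $\bar d_h^\pi(\phi)$: law of $\phi_h$ under $\phi_1\sim\bar\rho$, $\phi_{i+1}\sim\bar T(\cdot|\phi_i,\pi)$, with $\bar\rho(\phi)=\sum_{x\in\phi}\rho(x)$. Aggregated concentrability: $\bar{\mathsf{C}}_\epsilon(M,\Phi,\mu)=\max_h\max\{\frac{\sum_{\phi\in\mathcal{I}}\bar d_h^{\pi_e}(\phi)}{\sum_{\phi\in\mathcal{I}}\sum_{x\in\phi}\mu_h(x,\pi_e(x))}:\mathcal{I}\subseteq\Phi_h,\ \sum_{\phi\in\mathcal{I}}\bar d_h^{\pi_e}(\phi)\ge\epsilon\}$. *)

(* Defs.v *)
From HB Require Import structures.
From mathcomp Require Import all_boot all_order all_algebra.
Set Implicit Arguments. Unset Strict Implicit. Unset Printing Implicit Defensive.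
Import Order.TTheory GRing.Theory Num.Theory.
Local Open Scope ring_scope.

(* Layers are numbered 1..H (nat). A (stochastic) policy is pi : X -> A -> R,
   pi x a = pi(a|x).  Transition kernel T x a x' = T(x'|x,a). *)

(* Occupancy d_h^pi(x; M), h >= 1 (d_0 := 0, unused). *)
Fixpoint occ (R : ringType) (X A : finType) (rho : X -> R)
  (T : X -> A -> X -> R) (pi : X -> A -> R) (h : nat) (x : X) : R :=
  match h with
  | 0 => 0
  | h'.+1 =>
      if h' is 0 then rho x
      else \sum_(x0 : X) occ rho T pi h' x0 * (\sum_(a : A) pi x0 a * T x0 a x)
  end.

Definition Tbar (R : fieldType) (X A : finType) (T : X -> A -> X -> R)
  (mu : nat -> X -> A -> R) (pi : X -> A -> R) (h : nat)
  (phi phi' : {set X}) : R :=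
  (\sum_(x in phi) \sum_(x' in phi') \sum_(a : A) pi x a * mu h x a * T x a x')
  / (\sum_(x in phi) \sum_(a : A) pi x a * mu h x a).

Fixpoint dbar (R : fieldType) (X A : finType) (rho : X -> R)
  (T : X -> A -> X -> R) (mu : nat -> X -> A -> R)
  (Phi : nat -> {set {set X}}) (pi : X -> A -> R) (h : nat) (phi : {set X}) : R :=
  match h with
  | 0 => 0
  | h'.+1 =>
      if h' is 0 then \sum_(x in phi) rho x
      else \sum_(phi0 in Phi h')
             dbar rho T mu Phi pi h' phi0 * Tbar T mu pi h' phi0 phi
  end.

Definition det_policy (R : ringType) (X A : finType) (pe : X -> A) : X -> A -> R :=
  fun x a => (a == pe x)%:R.

(* Aggregated concentrability  Cbar_eps(M, Phi, mu): maximum over h in [H] and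
   I subset Phi_h with sum_{phi in I} dbar_h^{pi_e}(phi) >= eps of the ratio.
   (Max taken with neutral 0; all ratios are >= 0, and the theorem assumes the
   index set is nonempty.) *)
Definition Cbar (R : realFieldType) (X A : finType) (H : nat) (rho : X -> R)
  (T : X -> A -> X -> R) (mu : nat -> X -> A -> R)
  (Phi : nat -> {set {set X}}) (pe : X -> A) (eps : R) : R :=
  \big[Num.max/0]_(1 <= h < H.+1)
    \big[Num.max/0]_(I : {set {set X}} |
        (I \subset Phi h) &&
        (eps <= \sum_(phi in I) dbar rho T mu Phi (det_policy R pe) h phi))
      ((\sum_(phi in I) dbar rho T mu Phi (det_policy R pe) h phi)
       / (\sum_(phi in I) \sum_(x in phi) mu h x (pe x))).

(* Main.v *)
Require Import Defs.
From HB Require Import structures.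
From mathcomp Require Import all_boot all_order all_algebra.
Import Order.TTheory GRing.Theory Num.Theory.
Local Open Scope ring_scope.

Theorem mainTheorem9 (R : realFieldType) (X A : finType) (H : nat)
  (layer : X -> nat) (rho : X -> R) (T : X -> A -> X -> R)
  (Phi : nat -> {set {set X}}) (pe : X -> A) (pb : X -> A -> R)
  (mu : nat -> X -> A -> R) (CA eps : R) :
  (* layered Markov transition model *)
  (forall x, (1 <= layer x <= H)%N) ->
  (forall x, 0 <= rho x) -> \sum_(x : X) rho x = 1 ->
  (forall x, rho x != 0 -> layer x = 1%N) ->
  (forall x a x', 0 <= T x a x') ->
  (forall x a, (layer x < H)%N -> \sum_(x' : X) T x a x' = 1) ->
  (forall x a x', (layer x < H)%N -> T x a x' != 0 -> layer x' = (layer x).+1) ->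
  (* aggregation scheme: Phi_h is a partition of X_h *)
  (forall h, (1 <= h <= H)%N -> partition (Phi h) [set x | layer x == h]) ->
  (* behaviour policy and admissible offline distribution *)
  (forall x a, 0 <= pb x a) -> (forall x, \sum_(a : A) pb x a = 1) ->
  (forall h x a, (1 <= h <= H)%N -> mu h x a = occ rho T pb h x * pb x a) ->
  (* action coverage *)
  (forall x, 0 < pb x (pe x) /\ 1 / pb x (pe x) <= CA) ->
  0 < eps ->
  (* the set over which the maximum is taken is nonempty *)
  (exists h (I : {set {set X}}), (1 <= h <= H)%N /\ I \subset Phi h /\
      eps <= \sum_(phi in I) dbar rho T mu Phi (det_policy R pe) h phi) ->
  Cbar H rho T mu Phi pe eps <= CA ^+ H.
Proof.
move=> Hlay rho0 rho1 rholay T0 Tsum Tlay Hpart pb0 pb1 Hmu Hcov eps0 _.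
have occ0 : forall h x, 0 <= occ rho T pb h x.
  elim=> [|[|k] IH] x; [exact: lexx | exact: rho0 | ].
  rewrite -[occ _ _ _ _ _]/(\sum_(x0 : X) occ rho T pb k.+1 x0 * (\sum_(a : A) pb x0 a * T x0 a x)).
  apply: sumr_ge0 => x0 _; apply: mulr_ge0 => //; apply: sumr_ge0 => a _.
  exact: mulr_ge0.
have CApb : forall x, 1 <= CA * pb x (pe x).
  move=> x; have [p0 hp] := Hcov x.
  have -> : 1 = (1 / pb x (pe x)) * pb x (pe x) by rewrite mul1r mulVf ?gt_eqF.
  by apply: ler_wpM2r => //; exact: ltW.
have [x0 _] : exists x : X, true.
  case: (pickP (fun _ : X => true)) => [x _|H0]; first by exists x.
  by move: rho1; rewrite big_pred0 // => /eqP; rewrite eq_sym oner_eq0.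
have CA0 : 0 < CA.
  have [p0 hp] := Hcov x0; apply: lt_le_trans hp; exact: divr_gt0.
have CA1 : 1 <= CA.
  apply: le_trans (CApb x0) _; rewrite -[leRHS]mulr1; apply: ler_wpM2l; first exact: ltW.
  rewrite -(pb1 x0) (bigD1 (pe x0)) //= lerDl; apply: sumr_ge0 => a _; exact: pb0.
have detE : forall (f : A -> R) x, \sum_a det_policy R pe x a * f a = f (pe x).
  move=> f x; rewrite (bigD1 (pe x)) //= /det_policy eqxx mul1r big1 ?addr0 //.
  by move=> a /negbTE ->; rewrite mul0r.
have TbarE : forall k phi phi', (k.+1 <= H)%N ->
  Tbar T mu (det_policy R pe) k.+1 phi phi' =
  (\sum_(x in phi) \sum_(x' in phi') occ rho T pb k.+1 x * pb x (pe x) * T x (pe x) x')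
  / (\sum_(x in phi) occ rho T pb k.+1 x * pb x (pe x)).
  move=> k phi phi' hk; rewrite /Tbar; congr (_ / _); apply: eq_bigr => x _.
    apply: eq_bigr => x' _.
    rewrite (eq_bigr (fun a => det_policy R pe x a * (mu k.+1 x a * T x a x'))).
      by rewrite detE Hmu.
    by move=> a _; rewrite mulrA.
  by rewrite detE Hmu.
have DS : forall k (phi : {set X}), \sum_(x in phi) occ rho T pb k x <=
    CA * \sum_(x in phi) occ rho T pb k x * pb x (pe x).
  move=> k phi; rewrite mulr_sumr; apply: ler_sum => x _.
  by rewrite mulrCA -[leLHS]mulr1; apply: ler_wpM2l.
have key : forall k, (k.+1 <= H)%N -> forall phi,
    dbar rho T mu Phi (det_policy R pe) k.+1 phi <=
    CA ^+ k * \sum_(x in phi) occ rho T pb k.+1 x.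
  elim=> [|k IH] hk phi; first by rewrite /= expr0 mul1r.
  have hk' : (k.+1 <= H)%N by apply: ltnW.
  have dbarS : dbar rho T mu Phi (det_policy R pe) k.+2 phi =
    \sum_(phi0 in Phi k.+1) dbar rho T mu Phi (det_policy R pe) k.+1 phi0 *
       Tbar T mu (det_policy R pe) k.+1 phi0 phi by [].
  have occS : forall x', occ rho T pb k.+2 x' = \sum_(x : X) occ rho T pb k.+1 x *
       (\sum_(a : A) pb x a * T x a x') by [].
  rewrite dbarS.
  pose N (phi0 : {set X}) := \sum_(x in phi0) \sum_(x' in phi)
       occ rho T pb k.+1 x * pb x (pe x) * T x (pe x) x'.
  have N0 : forall phi0 : {set X}, 0 <= N phi0.
    move=> phi0; apply: sumr_ge0 => x _; apply: sumr_ge0 => x' _.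
    by apply: mulr_ge0 => //; apply: mulr_ge0.
  apply: (@le_trans _ _ (\sum_(phi0 in Phi k.+1) CA ^+ k.+1 * N phi0)).
    apply: ler_sum => phi0 _.
    rewrite TbarE // -/(N phi0).
    set S := \sum_(x in phi0) _.
    have S0 : 0 <= S by apply: sumr_ge0 => x _; apply: mulr_ge0.
    apply: (@le_trans _ _ (CA ^+ k * (\sum_(x in phi0) occ rho T pb k.+1 x) * (N phi0 / S))).
      by apply: ler_wpM2r; [apply: divr_ge0 | apply: IH].
    rewrite exprSr -!mulrA; apply: ler_wpM2l; first by apply: exprn_ge0; apply: ltW.
    have [->|Sn0] := eqVneq S 0.
      by rewrite invr0 !mulr0; apply: mulr_ge0 => //; apply: ltW.
    have Sp : 0 < S by rewrite lt_neqAle eq_sym Sn0 S0.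
    rewrite mulrCA mulrC; apply: ler_wpM2r => //.
    by rewrite ler_pdivrMr //; apply: DS.
  rewrite -mulr_sumr; apply: ler_wpM2l; first by apply: exprn_ge0; apply: ltW.
  have /and3P[_ triv _] : partition (Phi k.+1) [set x | layer x == k.+1] by apply: Hpart.
  rewrite /N -(@big_trivIset _ _ _ _ _ (fun x => \sum_(x' in phi)
      occ rho T pb k.+1 x * pb x (pe x) * T x (pe x) x') triv).
  apply: (@le_trans _ _ (\sum_(x : X) \sum_(x' in phi)
      occ rho T pb k.+1 x * pb x (pe x) * T x (pe x) x')).
    rewrite [Y in _ <= Y](bigID (fun x => x \in cover (Phi k.+1))) lerDl.
    apply: sumr_ge0 => x _; apply: sumr_ge0 => x' _.
    by apply: mulr_ge0 => //; apply: mulr_ge0.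
  rewrite exchange_big; apply: ler_sum => x' _; rewrite occS.
  apply: ler_sum => x _; rewrite -mulrA; apply: ler_wpM2l => //.
  rewrite (bigD1 (pe x)) //= lerDl; apply: sumr_ge0 => a _; exact: mulr_ge0.
have CAH0 : 0 <= CA ^+ H by apply: exprn_ge0; apply: ltW.
rewrite /Cbar big_nat_cond; apply: (big_ind (fun v => v <= CA ^+ H)) => //.
  by move=> u v hu hv; rewrite ge_max hu hv.
case=> [|k] /andP[/andP[hk1 hkH] _] //.
have hk : (k.+1 <= H)%N by [].
apply: (big_ind (fun v => v <= CA ^+ H)) => //.
  by move=> u v hu hv; rewrite ge_max hu hv.
move=> I /andP[sub _].
set Den := \sum_(phi in I) _.
set Num := \sum_(phi in I) _.
have hmu : Den = \sum_(phi in I) \sum_(x in phi) occ rho T pb k.+1 x * pb x (pe x).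
  by apply: eq_bigr => phi _; apply: eq_bigr => x _; rewrite Hmu.
have Den0 : 0 <= Den.
  by rewrite hmu; apply: sumr_ge0 => phi _; apply: sumr_ge0 => x _; apply: mulr_ge0.
have [->|Dn0] := eqVneq Den 0; first by rewrite invr0 mulr0.
have Dp : 0 < Den by rewrite lt_neqAle eq_sym Dn0 Den0.
rewrite ler_pdivrMr //.
apply: (@le_trans _ _ (CA ^+ k.+1 * Den)); last first.
  by apply: ler_wpM2r => //; apply: ler_weXn2l.
apply: (@le_trans _ _ (CA ^+ k * \sum_(phi in I) \sum_(x in phi) occ rho T pb k.+1 x)).
  by rewrite mulr_sumr; apply: ler_sum => phi _; apply: key.
rewrite exprSr -mulrA; apply: ler_wpM2l; first by apply: exprn_ge0; apply: ltW.
rewrite hmu mulr_sumr; apply: ler_sum => phi _; exact: DS.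
Qed.
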